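(* Assume the matching setting described in the context. (a) For every matching $M=\{e_1,\ldots,e_k\}$, every $\sigma\in\Omega$ and every ordering of $M$, the iterates $\sigma_0=\sigma$, $\sigma_i=\hat\psi(\{e_i\},\sigma_{i-1})$ satisfy $\{e_1,\ldots,e_i\}\subseteq\sigma_i$ for all $i\in[k]$. In particular $M\subseteq\hat\psi(M,\sigma)$. (b) For every $\sigma\in\Omega$ and all matchings $M,M'$ with $M\cup M'$ a matching, $\hat\psi(M,\hat\psi(M',\sigma))=\hat\psi(M',\hat\psi(M,\sigma))$. Consequently, the resampling oracles $\rho$ defined from $\psi$ are weakly commutative with respect to $\sim$. (c) $(F,\sim)$ is a potential causality graph for these resampling oracles.
   Context: Let $G=(V,E)$ be an undirected graph with $|V|=2n$ of one of the following two types: [P1] $G$ is the complete graph on $V$; [P2] $V$ is partitioned into sets $A_1,B_1,\ldots,A_r,B_r$ with $|A_i|=|B_i|$, and $E=\{\{u,v\}:u\in A_i,v\in B_i,i\in[r]\}$. In both cases $G$ has the property that whenever $(u',u,v,v')$ is a path in $G$ with distinct nodes, $\{u',v'\}\in E$. $\Omega$ is the set of perfect matchings of $G$ (each viewed as a set of edges), and $\mathcal{M}$ is the set of all matchings of $G$. For $M\in\mathcal{M}$ let $f_M=\{\sigma\in\Omega:M\subseteq\sigma\}$. The flaw set $F$ is any set of flaws of the form $f_M$, $M\in\mathcal{M}$, each nonempty. Define $f_M\sim f_{M'}$ iff $M\cup M'$ is not a matching or $M=M'$. Map $\hat\psi:\mathcal{M}\times\Omega\to\Omega$. For a single edge $e=\{u,v\}$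 let $u',v'$ be the nodes with $\{u,u'\},\{v,v'\}\in\sigma$, and set $\hat\psi(\{e\},\sigma)=(\sigma\setminus\{\{u,u'\},\{v,v'\}\})\cup\{\{u,v\},\{u',v'\}\}$; this equals $\sigma$ if $e\in\sigma$. For $M=\{e_1,\ldots,e_k\}$ (with $\hat\psi(\varnothing,\sigma)=\sigma$), set $\sigma_0=\sigma$, $\sigma_i=\hat\psi(\{e_i\},\sigma_{i-1})$ and $\hat\psi(M,\sigma)=\sigma_k$; the result does not depend on the ordering of $M$. Resampling oracles: for $f_M\in F$ and $\sigma\in f_M$ let $A(f_M,\sigma)=\{\sigma'\in\Omega:\hat\psi(M,\sigma')=\sigma\}$, and let $\rho(\cdot\mid f_M,\sigma)$ be uniform on $A(f_M,\sigma)$. A step $\sigma\xrightarrow{f}\sigma'$ means $\sigma\in f$ and $\sigma'\in A(f,\sigma)$. Weak commutativity w.r.t. $\sim$: there is an injective map sending each two-step walk $\sigma_1\xrightarrow{f}\sigma_2\xrightarrow{g}\sigma_3$ with $f\not\sim g$ to a walk $\sigma_1\xrightarrow{g}\sigma_2'\xrightarrow{f}\sigma_3$. $(F,\sim)$ is a potential causality graph if for every step $\sigma\xrightarrow{f}\sigma'$ one has $\{g\in F:\sigma'\in g\}\subseteq(\{g\in F:\sigma\in g\}\setminus\{f\})\cup\{g:f\sim g\}$. *)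

(* Defs.v *)
From mathcomp Require Import all_boot.
Set Implicit Arguments. Unset Strict Implicit. Unset Printing Implicit Defensive.

Section Matchings.
Variable V : finType.
Variable E : rel V.

Definition graph_P1 : Prop := forall u v : V, E u v = (u != v).

Definition graph_P2 : Prop :=
  exists (r : nat) (A B : 'I_r -> {set V}),
    [/\ (forall i j, i != j -> [disjoint (A i) & (A j)]),
        (forall i j, i != j -> [disjoint (B i) & (B j)]),
        (forall i j, [disjoint (A i) & (B j)]),
        (forall x : V, exists i, (x \in A i) || (x \in B i)) &
        ((forall i, #|A i| = #|B i|) /\
        (forall u v, E u v =
           [exists i, ((u \in A i) && (v \in B i)) || ((v \in A i) && (u \in B i))]))].

Definition is_edge (e : {set V}) : bool :=
  [exists u, exists v, E u v && (e == [set u; v])].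

Definition is_matching (M : {set {set V}}) : bool :=
  [forall e in M, is_edge e] &&
  [forall e1 in M, forall e2 in M, (e1 != e2) ==> [disjoint e1 & e2]].

(* perfect matching: a matching covering every vertex (elements of Omega) *)
Definition is_perfect (s : {set {set V}}) : bool :=
  is_matching s && [forall x : V, [exists e in s, x \in e]].

Definition flaw (M : {set {set V}}) : {set {set {set V}}} :=
  [set s | is_perfect s & M \subset s].

Definition flaw_rel (M M' : {set {set V}}) : bool :=
  ~~ is_matching (M :|: M') || (M == M').

Definition partner (s : {set {set V}}) (u : V) : V :=
  odflt u [pick w | [set u; w] \in s].

Definition psi_pair (s : {set {set V}}) (u v : V) : {set {set V}} :=
  let u' := partner s u in let v' := partner s v in
  (s :\: [set [set u; u']; [set v; v']]) :|: [set [set u; v]; [set u'; v']].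

Definition psi1 (e : {set V}) (s : {set {set V}}) : {set {set V}} :=
  match enum e with
  | [:: u; v] => psi_pair s u v
  | _ => s
  end.

Definition psi_seq (es : seq {set V}) (s : {set {set V}}) : {set {set V}} :=
  foldl (fun t e => psi1 e t) s es.

(* \hat\psi(M, s), using the canonical enumeration of M as the ordering *)
Definition psi (M : {set {set V}}) (s : {set {set V}}) : {set {set V}} :=
  psi_seq (enum M) s.

Definition Aset (M : {set {set V}}) (s : {set {set V}}) : {set {set {set V}}} :=
  [set s' | is_perfect s' & psi M s' == s].

Definition step (M : {set {set V}}) (s s' : {set {set V}}) : Prop :=
  s \in flaw M /\ s' \in Aset M s.

(* two-step walks (f, s1, s2, g, s3), flaws indexed by their matchings *)
Definition walk2 := ({set {set V}} * {set {set V}} * {set {set V}}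
                     * {set {set V}} * {set {set V}})%type.

Definition is_walk2 (FM : {set {set {set V}}}) (w : walk2) : Prop :=
  let: (f, s1, s2, g, s3) := w in
  [/\ f \in FM, g \in FM, step f s1 s2 & step g s2 s3].

Definition weakly_commutative (FM : {set {set {set V}}}) : Prop :=
  exists phi : walk2 -> walk2,
    (forall w1 w2, is_walk2 FM w1 -> ~~ flaw_rel w1.1.1.1.1 w1.1.2 ->
                   is_walk2 FM w2 -> ~~ flaw_rel w2.1.1.1.1 w2.1.2 ->
                   phi w1 = phi w2 -> w1 = w2) /\
    (forall w, is_walk2 FM w -> ~~ flaw_rel w.1.1.1.1 w.1.2 ->
       let: (f, s1, _, g, s3) := w in
       exists s2', phi w = (g, s1, s2', f, s3) /\ is_walk2 FM (phi w)).

Definition potential_causality_graph (FM : {set {set {set V}}}) : Prop :=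
  forall M s s', M \in FM -> step M s s' ->
    forall M', M' \in FM -> s' \in flaw M' ->
      (s \in flaw M' /\ M' != M) \/ flaw_rel M M'.

End Matchings.

(* Main.v *)
Require Import Defs.
From mathcomp Require Import all_boot.
From Stdlib Require Import FunctionalExtensionality.
Set Implicit Arguments. Unset Strict Implicit. Unset Printing Implicit Defensive.

Definition qf {V : eqType} (p : V -> V) (a b : V) : V -> V := fun z =>
  if z == a then b else if z == b then a else if z == p a then p b
  else if z == p b then p a else p z.

Definition good {V : eqType} (p : V -> V) := involutive p /\ forall z, p z != z.

Ltac step p pK fp :=
  match goal with
  | H : ?a = ?a |- _ => clear H
  | H : ?a <> ?a |- _ => by case: H
  | H : p ?a = ?a |- _ => by move: (fp a); rewrite H eqxx
  | H : ?a = p ?a |- _ => by move: (fp a); rewrite -H eqxx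
  | H : p ?a = p ?b |- _ => have {H} H := can_inj pK H
  | H : ?a = p ?b |- _ => is_var a; subst a
  | H : p ?b = ?a |- _ => is_var a; subst a
  | H : ?a = ?b |- _ => is_var a; subst a
  | H : ?a = ?b |- _ => is_var b; subst b
  | |- context [p (p ?a)] => rewrite (pK a)
  | |- context [?a == ?a] => rewrite eqxx
  | |- context [if ?a == ?b then _ else _] => let h := fresh "h" in case: (a =P b) => h
  | H : context [p (p ?a)] |- _ => rewrite (pK a) in H
  | H : context [?a == ?a] |- _ => rewrite eqxx in H
  | H : context [if ?a == ?b then _ else _] |- _ => let h := fresh "h" in move: H; case: (a =P b) => h H
  end.

Ltac brute p pK fp := repeat (progress (try step p pK fp)); try congruence; try (by apply/eqP; rewrite ?fp // eq_sym fp).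

Lemma qf_good {V : eqType} (p : V -> V) a b : good p -> a != b -> good (qf p a b).
Proof.
case=> pK fp /eqP ab; split.
- move=> z; rewrite /qf; brute p pK fp.
- move=> z; apply/eqP; rewrite /qf; brute p pK fp.
Qed.

Lemma qf_comm {V : eqType} (p : V -> V) a b x y : good p ->
  a != b -> a != x -> a != y -> b != x -> b != y -> x != y ->
  qf (qf p a b) x y = qf (qf p x y) a b.
Proof.
case=> pK fp /eqP ab /eqP ax /eqP ay /eqP bx /eqP by_ /eqP xy.
apply: functional_extensionality => z; rewrite /qf.
brute p pK fp.
Qed.

Definition Tset {V : finType} (p : V -> V) : {set {set V}} := [set [set z; p z] | z : V].
Definition qe {V : finType} (e : {set V}) (p : V -> V) : V -> V :=
  match enum e with [:: a; b] => qf p a b | _ => p end.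
Definition qseq {V : finType} (l : seq {set V}) (p : V -> V) := foldl (fun r e => qe e r) p l.

Lemma set2_eq {V : finType} (a b c d : V) :
  [set a; b] = [set c; d] -> (a = c /\ b = d) \/ (a = d /\ b = c).
Proof.
move=> H.
have: a \in [set c; d] by rewrite -H set21.
have: b \in [set c; d] by rewrite -H set22.
have: c \in [set a; b] by rewrite H set21.
have: d \in [set a; b] by rewrite H set22.
rewrite !inE => /orP[]/eqP H1 /orP[]/eqP H2 /orP[]/eqP H3 /orP[]/eqP H4;
  by (left; split; congruence) || (right; split; congruence).
Qed.

Lemma T_mem {V : finType} (p : V -> V) y : [set y; p y] \in Tset p.
Proof. exact: imset_f. Qed.

Lemma T_memP {V : finType} (p : V -> V) e :
  reflect (exists y, e = [set y; p y]) (e \in Tset p).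
Proof.
apply: (iffP imsetP) => [[y _ ->]|[y ->]]; first by exists y.
by exists y.
Qed.

Lemma partner_T {V : finType} (p : V -> V) z : good p -> partner (Tset p) z = p z.
Proof.
case=> pK fp; rewrite /partner; case: pickP => [w|].
- case/T_memP => y /set2_eq [[-> ->] | [-> ->]] //=; by rewrite pK.
- by move/(_ (p z)); rewrite T_mem.
Qed.

Lemma psi_pair_T {V : finType} (p : V -> V) a b : good p -> a != b ->
  psi_pair (Tset p) a b = Tset (qf p a b).
Proof.
move=> gp ab; have [pK fp] := gp.
rewrite /psi_pair !partner_T //; apply/setP => e; apply/idP/idP.
- rewrite !inE => /orP[/andP[He HT] | /orP[]/eqP->].
  + case/T_memP: HT He => y -> He.
    have ya : y != a by apply: contraNneq He => ->; rewrite eqxx.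
    have yb : y != b by apply: contraNneq He => ->; rewrite eqxx orbT.
    have ypa : y != p a by apply: contraNneq He => ->; rewrite pK setUC eqxx.
    have ypb : y != p b by apply: contraNneq He => ->; rewrite pK setUC eqxx orbT.
    have H : qf p a b y = p y by rewrite /qf (negbTE ya) (negbTE yb) (negbTE ypa) (negbTE ypb).
    by move: (T_mem (qf p a b) y); rewrite H.
  + have H : qf p a b a = b by rewrite /qf eqxx.
    by move: (T_mem (qf p a b) a); rewrite H.
  + case: (eqVneq (p a) b) => pab.
    * have pba : p b = a by rewrite -pab pK.
      rewrite pab pba setUC.
      have H : qf p a b a = b by rewrite /qf eqxx.
      by move: (T_mem (qf p a b) a); rewrite H.
    * have H : qf p a b (p a) = p b by rewrite /qf (negbTE (fp a)) (negbTE pab) eqxx.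
      by move: (T_mem (qf p a b) (p a)); rewrite H.
- case/T_memP => y ->; rewrite /qf.
  case: (eqVneq y a) => [->|ya]; first by rewrite !inE eqxx orbT.
  case: (eqVneq y b) => [->|yb]; first by rewrite !inE setUC eqxx orbT.
  case: (eqVneq y (p a)) => [->|ypa]; first by rewrite !inE eqxx !orbT.
  case: (eqVneq y (p b)) => [->|ypb]; first by rewrite !inE setUC eqxx !orbT.
  rewrite !inE T_mem andbT; apply/orP; left.
  apply/negP => /orP[]/eqP/set2_eq [[]|[]] H1 H2.
  all: by move: ya yb ypa ypb; rewrite H1 eqxx.
Qed.

Lemma enum2_set {V : finType} (e : {set V}) a b : enum e = [:: a; b] -> e = [set a; b].
Proof. by move=> Ee; apply/setP => x; rewrite -mem_enum Ee !inE. Qed.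

Lemma enum2_neq {V : finType} (e : {set V}) a b : enum e = [:: a; b] -> a != b.
Proof. by move=> Ee; have := enum_uniq (mem e); rewrite Ee /= inE andbT. Qed.

Lemma qe_good {V : finType} (e : {set V}) p : good p -> good (qe e p).
Proof.
move=> gp; rewrite /qe; case Ee: (enum e) => [|a [|b [|c l]]] //.
exact: qf_good (enum2_neq Ee).
Qed.

Lemma psi1_T {V : finType} (e : {set V}) p : good p -> psi1 e (Tset p) = Tset (qe e p).
Proof.
move=> gp; rewrite /psi1 /qe; case Ee: (enum e) => [|a [|b [|c l]]] //.
exact: psi_pair_T (enum2_neq Ee).
Qed.

Lemma qseq_good {V : finType} (l : seq {set V}) p : good p -> good (qseq l p).
Proof. by elim: l p => //= e l IH p gp; apply: IH; apply: qe_good. Qed.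

Lemma psi_seq_T {V : finType} (l : seq {set V}) p : good p ->
  psi_seq l (Tset p) = Tset (qseq l p).
Proof.
elim: l p => //= e l IH p gp.
rewrite /psi_seq /= -/(psi_seq l _) psi1_T // IH //; exact: qe_good.
Qed.

Lemma in_neq {V : finType} (e f : {set V}) u w :
  [disjoint e & f] -> u \in e -> w \in f -> u != w.
Proof. by move=> dis ue wf; apply/eqP => uw; move: (disjointFr dis ue); rewrite uw wf. Qed.

Lemma qe_comm {V : finType} (e f : {set V}) p : good p -> (e == f) || [disjoint e & f] ->
  qe e (qe f p) = qe f (qe e p).
Proof.
move=> gp /orP[/eqP->//|dis]; rewrite /qe.
case Ee: (enum e) => [|a [|b [|c l]]] //; case Ef: (enum f) => [|x [|y [|c' l']]] //.
have ae : a \in e by rewrite -mem_enum Ee !inE eqxx.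
have be : b \in e by rewrite -mem_enum Ee !inE eqxx orbT.
have xf : x \in f by rewrite -mem_enum Ef !inE eqxx.
have yf : y \in f by rewrite -mem_enum Ef !inE eqxx orbT.
have := enum2_neq Ee; have := enum2_neq Ef => xy ab.
symmetry; apply: qf_comm => //; first [exact: (in_neq dis ae xf) | exact: (in_neq dis ae yf) | exact: (in_neq dis be xf) | exact: (in_neq dis be yf)].
Qed.

Definition compat {V : finType} (l : seq {set V}) :=
  forall e f, e \in l -> f \in l -> (e == f) || [disjoint e & f].

Lemma qe_qseq {V : finType} (e : {set V}) l p : good p ->
  (forall f, f \in l -> (e == f) || [disjoint e & f]) -> qe e (qseq l p) = qseq l (qe e p).
Proof.
elim: l p => //= f l IH p gp H.
rewrite IH; last by move=> g gl; apply: H; rewrite inE gl orbT.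
  by rewrite qe_comm // H // mem_head.
exact: qe_good.
Qed.

Lemma qseq_cat {V : finType} (l1 l2 : seq {set V}) p : qseq (l1 ++ l2) p = qseq l2 (qseq l1 p).
Proof. by rewrite /qseq foldl_cat. Qed.

Lemma qseq_perm {V : finType} (l l' : seq {set V}) p : good p -> compat l -> perm_eq l l' ->
  qseq l p = qseq l' p.
Proof.
elim: l l' p => [|e l IH] l' p gp C P.
  by move: P; rewrite perm_sym => /perm_nilP ->.
have He : e \in l' by rewrite -(perm_mem P) mem_head.
case/splitPr: He P => l2 l3 P.
rewrite qseq_cat /= (qe_qseq (l:=l2)) //; last first.
  by move=> f fl2; apply: C; rewrite ?mem_head // (perm_mem P) mem_cat fl2.
rewrite -qseq_cat; apply: IH; first exact: qe_good.
  by move=> f g fl gl; apply: C; rewrite inE ?fl ?gl orbT.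
have P' : perm_eq (l2 ++ e :: l3) (e :: l2 ++ l3) by rewrite -cat1s perm_catCA.
by rewrite -(perm_cons e); apply: perm_trans P P'.
Qed.

Lemma K1 {V : finType} (e : {set V}) a b r : good r -> enum e = [:: a; b] -> e \in Tset (qe e r).
Proof.
move=> gr Ee; rewrite {1}(enum2_set Ee) /qe Ee.
have H : qf r a b a = b by rewrite /qf eqxx.
by move: (T_mem (qf r a b) a); rewrite H.
Qed.

Lemma K2 {V : finType} (d e : {set V}) r : good r -> d \in Tset r -> [disjoint d & e] ->
  d \in Tset (qe e r).
Proof.
case=> rK fr /T_memP [y ->] dis; rewrite /qe.
case Ee: (enum e) => [|a [|b [|c l]]]; try exact: T_mem.
have ye : y \in e = false by apply: disjointFr dis (set21 _ _).
have rye : r y \in e = false by apply: disjointFr dis (set22 _ _).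
rewrite (enum2_set Ee) !inE in ye rye.
case/norP: ye => ya yb; case/norP: rye => rya ryb.
have ra : y != r a by apply: contraNneq rya => ->; rewrite rK.
have rb : y != r b by apply: contraNneq ryb => ->; rewrite rK.
have H : qf r a b y = r y by rewrite /qf (negbTE ya) (negbTE yb) (negbTE ra) (negbTE rb).
by move: (T_mem (qf r a b) y); rewrite H.
Qed.

Lemma K3 {V : finType} (d : {set V}) (l : seq {set V}) r : good r -> d \in Tset r ->
  (forall f, f \in l -> [disjoint d & f]) -> d \in Tset (qseq l r).
Proof.
elim: l r => //= f l IH r gr dr H.
apply: IH; [exact: qe_good | apply: K2 => //; apply: H; exact: mem_head |].
by move=> g gl; apply: H; rewrite inE gl orbT.
Qed.

Lemma A_list {V : finType} (l : seq {set V}) p : good p ->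
  (forall e, e \in l -> exists a b, enum e = [:: a; b]) -> compat l ->
  [set e in l] \subset Tset (qseq l p).
Proof.
move=> gp; elim/last_ind: l => [|l e IH] H C; first by apply/subsetP => d; rewrite inE.
rewrite /qseq foldl_rcons -/(qseq l p).
have g' := qseq_good l gp.
have [a [b Ee]] : exists a b, enum e = [:: a; b] by apply: H; rewrite mem_rcons mem_head.
apply/subsetP => d; rewrite inE mem_rcons inE => /orP[/eqP->|dl]; first exact: K1 Ee.
have dT : d \in Tset (qseq l p).
  apply: (subsetP (IH _ _)); last by rewrite inE.
  - by move=> f fl; apply: H; rewrite mem_rcons inE fl orbT.
  - by move=> f g fl gl; apply: C; rewrite mem_rcons inE ?fl ?gl orbT.
have := C d e; rewrite !mem_rcons !inE dl eqxx orbT => /(_ isT isT) /orP[/eqP->|dis].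
  exact: K1 Ee.
exact: K2.
Qed.

Lemma graph_props {V : finType} (E : rel V) : graph_P1 E \/ graph_P2 E ->
  [/\ forall u, E u u = false, forall u v, E u v = E v u &
      forall u' u v v', E u' u -> E u v -> E v v' -> u' != v' -> E u' v'].
Proof.
case=> [h1 | [r [A [B [dA dB dAB cov [cAB hE]]]]]].
  split=> [u|u v|u' u v v' _ _ _]; rewrite ?h1 ?eqxx //; first by rewrite eq_sym.
have AA : forall x i j, x \in A i -> x \in A j -> i = j.
  move=> x i j xi xj; apply/eqP; apply/negPn/negP => ij.
  by move: (disjointFr (dA i j ij) xi); rewrite xj.
have BB : forall x i j, x \in B i -> x \in B j -> i = j.
  move=> x i j xi xj; apply/eqP; apply/negPn/negP => ij.
  by move: (disjointFr (dB i j ij) xi); rewrite xj.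
have AB : forall x i j, x \in A i -> x \in B j -> False.
  by move=> x i j xi xj; move: (disjointFr (dAB i j) xi); rewrite xj.
split.
- move=> u; rewrite hE; apply/negbTE/negP => /existsP [i /orP[]/andP[H1 H2]]; [exact: AB H1 H2 | exact: AB H1 H2].
- move=> u v; rewrite !hE; apply/existsP/existsP => [[i H]|[i H]]; exists i; by rewrite orbC.
move=> u' u v v'; rewrite !hE.
move=> /existsP [i /orP[]/andP[H1 H2]] /existsP [j /orP[]/andP[H3 H4]]
        /existsP [k /orP[]/andP[H5 H6]] _.
- by case: (AB _ _ _ H3 H2).
- by case: (AB _ _ _ H3 H2).
- have ji := BB _ _ _ H4 H2; subst j.
  have ki := AA _ _ _ H5 H3; subst k.
  by apply/existsP; exists i; rewrite H1 H6.
- by case: (AB _ _ _ H3 H6).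
- have ji := AA _ _ _ H3 H1; subst j.
  by case: (AB _ _ _ H5 H4).
- have ji := AA _ _ _ H3 H1; subst j.
  have ki := BB _ _ _ H6 H4; subst k.
  by apply/existsP; exists i; rewrite H2 H5 orbT.
- by case: (AB _ _ _ H1 H4).
- by case: (AB _ _ _ H1 H4).
Qed.

Definition Egood {V : finType} (E : rel V) (p : V -> V) := forall z, E z (p z).

Lemma match_edge {V : finType} (E : rel V) M e : is_matching E M -> e \in M -> is_edge E e.
Proof. by case/andP => /forall_inP H _; apply: H. Qed.

Lemma match_dis {V : finType} (E : rel V) M e f : is_matching E M -> e \in M -> f \in M ->
  (e == f) || [disjoint e & f].
Proof.
case/andP => _ /forall_inP H eM fM; move: (H e eM) => /forall_inP /(_ f fM).
by case: eqP.
Qed.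

Lemma edgeP {V : finType} (E : rel V) e : is_edge E e -> exists u v, E u v /\ e = [set u; v].
Proof. by case/existsP => u /existsP [v /andP [H /eqP ->]]; exists u, v. Qed.

Lemma edge_enum {V : finType} (E : rel V) e : (forall u, E u u = false) -> is_edge E e ->
  exists a b, enum e = [:: a; b].
Proof.
move=> irr /edgeP [u [v [Huv ->]]].
have uv : u != v by apply: contraTneq Huv => ->; rewrite irr.
have : size (enum [set u; v]) = 2 by rewrite -cardE cards2 uv.
by case: (enum _) => [|a [|b [|c l]]] // _; exists a, b.
Qed.

Lemma perf_T {V : finType} (E : rel V) s : (forall u, E u u = false) ->
  (forall u v, E u v = E v u) -> is_perfect E s ->
  [/\ s = Tset (partner s), good (partner s) & Egood E (partner s)].
Proof.
move=> irr sym /andP [/andP [/forall_inP He /forall_inP Hd] /forallP Hc].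
have edge : forall e, e \in s -> exists u v, E u v /\ e = [set u; v].
  by move=> e es; apply: edgeP; apply: He.
have dis : forall e1 e2, e1 \in s -> e2 \in s -> e1 != e2 -> [disjoint e1 & e2].
  by move=> e1 e2 h1 h2; move/forall_inP: (Hd e1 h1) => /(_ e2 h2) /implyP.
have A : forall z w, [set z; w] \in s -> w != z.
  move=> z w /edge [u [v [Euv /set2_eq H]]]; apply/eqP => wz; subst w.
  by move: Euv; case: H => [[<- <-]|[<- <-]]; rewrite irr.
have B : forall z w w', [set z; w] \in s -> [set z; w'] \in s -> w = w'.
  move=> z w w' h1 h2; case: (eqVneq [set z; w] [set z; w']) => [/set2_eq|ne].
    case=> [[_ //]|[_ wz]]; by move: (A _ _ h1); rewrite wz eqxx.
  by move: (disjointFr (dis _ _ h1 h2 ne) (set21 z w)); rewrite set21.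
have C : forall z, exists w, [set z; w] \in s.
  move=> z; case/exists_inP: (Hc z) => e es ze.
  case: (edge e es) => u [v [_ Ee]]; move: ze es; rewrite Ee !inE => /orP[]/eqP-> es.
    by exists v.
  by exists u; rewrite setUC.
have PS : forall z, [set z; partner s z] \in s.
  move=> z; rewrite /partner; case: pickP => [w //|H].
  by case: (C z) => w; rewrite H.
have gp : good (partner s).
  split=> [z|z]; last exact: A (PS z).
  by apply: (B (partner s z)); [exact: PS | rewrite setUC; exact: PS].
split=> //.
- apply/setP => e; apply/idP/idP => [es|/T_memP [y ->] //].
  case: (edge e es) => u [v [_ Ee]]; subst e.
  by rewrite (B u v (partner s u)) // T_mem.
- move=> z; case: (edge _ (PS z)) => u [v [Euv /set2_eq [[-> ->]|[-> ->]]]] //.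
  by rewrite sym.
Qed.

Lemma T_perfect {V : finType} (E : rel V) p : good p -> Egood E p -> is_perfect E (Tset p).
Proof.
case=> pK fp Ep; apply/andP; split; [apply/andP; split|].
- apply/forall_inP => e /T_memP [y ->]; apply/existsP; exists y; apply/existsP; exists (p y).
  by rewrite Ep eqxx.
- apply/forall_inP => e1 /T_memP [y ->]; apply/forall_inP => e2 /T_memP [z ->].
  apply/implyP => ne; rewrite disjoint_subset; apply/subsetP => w; rewrite !inE.
  move=> Hw; apply/negP => Hw'; move/negP: ne; apply; apply/eqP.
  case/orP: Hw => /eqP Hw; case/orP: Hw' => /eqP Hw'; subst w.
  + by rewrite Hw'.
  + by rewrite Hw' pK setUC.
  + by rewrite -Hw' pK setUC.
  + by rewrite -(pK y) Hw' pK.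
- apply/forallP => z; apply/exists_inP; exists [set z; p z]; [exact: T_mem | exact: set21].
Qed.

Lemma qf_E {V : finType} (E : rel V) p a b : (forall u v, E u v = E v u) ->
  (forall u' u v v', E u' u -> E u v -> E v v' -> u' != v' -> E u' v') ->
  good p -> Egood E p -> E a b -> a != b -> Egood E (qf p a b).
Proof.
move=> sym path [pK fp] Ep Eab ab z; rewrite /qf.
case: eqP => [->//|za]; case: eqP => [->|zb]; first by rewrite sym.
have Hpp : E (p a) (p b).
  apply: (path _ a b); [by rewrite sym | done | done |].
  by apply: contra ab => /eqP/(can_inj pK)/eqP.
case: eqP => [->//|zpa]; case: eqP => [->|zpb]; first by rewrite sym.
exact: Ep.
Qed.

Lemma qe_E {V : finType} (E : rel V) p e : (forall u v, E u v = E v u) ->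
  (forall u' u v v', E u' u -> E u v -> E v v' -> u' != v' -> E u' v') ->
  good p -> Egood E p -> is_edge E e -> Egood E (qe e p).
Proof.
move=> sym path gp Ep /edgeP [u [v [Euv Ee']]]; rewrite /qe.
case Ee: (enum e) => [|a [|b [|c l]]] //.
apply: qf_E => //; last exact: enum2_neq Ee.
move: Ee'; rewrite (enum2_set Ee) => /set2_eq [[-> ->]|[-> ->]] //.
by rewrite sym.
Qed.

Lemma qseq_E {V : finType} (E : rel V) p (l : seq {set V}) : (forall u v, E u v = E v u) ->
  (forall u' u v v', E u' u -> E u v -> E v v' -> u' != v' -> E u' v') ->
  (forall e, e \in l -> is_edge E e) -> good p -> Egood E p -> Egood E (qseq l p).
Proof.
move=> sym path; elim: l p => //= e l IH p H gp Ep.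
apply: IH; [by move=> f fl; apply: H; rewrite inE fl orbT | exact: qe_good |].
by apply: qe_E => //; apply: H; rewrite mem_head.
Qed.
Unset Implicit Arguments.

Theorem proposition6 (V : finType) (n : nat) (E : rel V)
  (hV : #|V| = n.*2) (hG : graph_P1 E \/ graph_P2 E)
  (FM : {set {set {set V}}})
  (hF : forall M, M \in FM -> is_matching E M /\ flaw E M != set0) :
  (* (a) *)
  (forall (M : {set {set V}}) (s : {set {set V}}) (es : seq {set V}),
     is_matching E M -> is_perfect E s -> perm_eq es (enum M) ->
     (forall i, 1 <= i <= size es ->
        [set e in take i es] \subset psi_seq (take i es) s)
     /\ M \subset psi M s) /\
  (* (b) *)
  (forall (s M M' : {set {set V}}),
     is_perfect E s -> is_matching E M -> is_matching E M' ->
     is_matching E (M :|: M') ->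
     psi M (psi M' s) = psi M' (psi M s)) /\
  weakly_commutative E FM /\
  (* (c) *)
  potential_causality_graph E FM.
Proof.
have [irr sym path] := graph_props hG.
have perf := fun s (hs : is_perfect E s) => perf_T irr sym hs.
have psiT : forall M p, good p -> psi M (Tset p) = Tset (qseq (enum M) p).
  by move=> M p gp; exact: psi_seq_T.
have sub : forall M s, is_matching E M -> is_perfect E s -> M \subset psi M s.
  move=> M s hM hs; case: (perf s hs) => sT gp _; rewrite sT psiT //.
  have HA : [set e in enum M] \subset Tset (qseq (enum M) (partner s)).
    apply: A_list => //.
    - move=> f; rewrite mem_enum => fM; apply: edge_enum irr _; exact: match_edge hM fM.
    - move=> f g; rewrite !mem_enum; exact: match_dis hM.
  by apply/subsetP => e eM; apply: (subsetP HA); rewrite inE mem_enum.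
have pp : forall M s, is_matching E M -> is_perfect E s -> is_perfect E (psi M s).
  move=> M s hM hs; case: (perf s hs) => sT gp Ep; rewrite sT psiT //.
  apply: T_perfect; first exact: qseq_good.
  apply: qseq_E => // f; rewrite mem_enum; exact: match_edge hM.
have comm : forall s M M', is_perfect E s -> is_matching E M -> is_matching E M' ->
    is_matching E (M :|: M') -> psi M (psi M' s) = psi M' (psi M s).
  move=> s M M' hs hM hM' hMM'; case: (perf s hs) => sT gp _.
  have g1 := qseq_good (enum M') gp; have g2 := qseq_good (enum M) gp.
  rewrite sT !psiT // -!qseq_cat; congr Tset.
  apply: qseq_perm => //; last by rewrite perm_catC.
  move=> e f; rewrite !mem_cat !mem_enum => eM fM.
  by apply: (match_dis hMM'); rewrite inE orbC.
split.
  move=> M s es hM hs hperm; split; last exact: sub.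
  move=> i _; case: (perf s hs) => sT gp _; rewrite sT psi_seq_T //.
  have inM : forall e, e \in take i es -> e \in M.
    by move=> e /mem_take; rewrite (perm_mem hperm) mem_enum.
  apply: A_list => //.
  - move=> e /inM eM; apply: edge_enum irr _; exact: match_edge hM eM.
  - move=> e f /inM eM /inM fM; exact: match_dis hM eM fM.
split; first exact: comm.
split.
  exists (fun w : walk2 V => let: (f, s1, s2, g, s3) := w in (g, s1, psi f s3, f, s3)).
  split.
  - move=> [[[[f1 a1] b1] g1] c1] [[[[f2 a2] b2] g2] c2] /= [_ _ _ [_ H1]] _ [_ _ _ [_ H2]] _ Heq.
    case: Heq => Eg Ea _ Ef Ec; subst.
    by move: H1 H2; rewrite !inE => /andP[_ /eqP <-] /andP[_ /eqP <-].
  - move=> [[[[f s1] s2] g] s3] /= [fF gF [s1f s2A] [s2g s3A]] nfr.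
    exists (psi f s3); split => //.
    have [hf _] := hF f fF; have [hg _] := hF g gF.
    move: s2A s3A s1f; rewrite !inE => /andP [hs2 /eqP e2] /andP [hs3 /eqP e3] /andP [hs1 _].
    move: nfr; rewrite /flaw_rel negb_or negbK => /andP [hfg _].
    have hp := pp f s3 hf hs3.
    have E1 : s1 = psi g (psi f s3) by rewrite -e2 -e3 comm.
    split => //; split.
    + by rewrite inE hs1 E1 sub.
    + by rewrite inE hp -E1 eqxx.
    + by rewrite inE hp sub.
    + by rewrite inE hs3 eqxx.
move=> M s s' MF [sf s'A] M' M'F s'f'.
case: (boolP (flaw_rel E M M')) => [h|h]; [by right | left].
move: h; rewrite /flaw_rel negb_or negbK => /andP [hMM' neq].
split; last by rewrite eq_sym.
have [hM _] := hF M MF.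
move: sf s'A s'f'; rewrite !inE => /andP [hs _] /andP [hs' /eqP es] /andP [_ sub'].
rewrite hs /= -es; apply/subsetP => e eM'.
case: (boolP (e \in M)) => eM; first exact: (subsetP (sub M s' hM hs')).
have eT : e \in s' by exact: (subsetP sub').
case: (perf s' hs') => sT gp _; move: eT; rewrite sT psiT // => eT.
apply: K3 => // f; rewrite mem_enum => fM.
have := match_dis hMM' (_ : e \in M :|: M') (_ : f \in M :|: M').
rewrite !inE eM' fM orbT /= => /(_ isT isT) /orP [/eqP ef|//].
by move: eM; rewrite ef fM.
Qed.
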